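(* Let $n\ge 1$, and let $a_0,a_1,\dots,a_{n-1}$ and $b_1,\dots,b_{n-1}$ be positive integers. Define $p_0=a_0$, $p_1=a_0a_1+b_1$, and $p_k=a_kp_{k-1}+b_kp_{k-2}$ for $k\ge 2$ (so $p_{n-1}/q_{n-1}$ is the value of the generalized continued fraction $a_0+\cfrac{b_1}{a_1+\cfrac{b_2}{\ddots+\cfrac{b_{n-1}}{a_{n-1}}}}$, where $q_0=1$, $q_1=a_1$, $q_k=a_kq_{k-1}+b_kq_{k-2}$; $p_{n-1},q_{n-1}$ need not be coprime). Then $$Z\bigl(D_n(a_0,a_1,\dots,a_{n-1};\,b_1,\dots,b_{n-1})\bigr)=p_{n-1}.$$
   Context: Graphs may have parallel edges, regarded as distinct. For a (multi)graph $G$, $p(G,k)$ is the number of sets of $k$ pairwise disjoint edges (no two sharing an endpoint), $p(G,0)=1$, and $Z(G)=\sum_{k\ge0}p(G,k)$ (Hosoya index). For positive integers $x_1,\dots,x_n$ and $y_1,\dots,y_{n-1}$, the caterpillar-bond graph $D_n(x_1,\dots,x_n;y_1,\dots,y_{n-1})$ is the multigraph obtained as follows: take vertices $v_1,\dots,v_n$; for each $i=1,\dots,n-1$ join $v_i$ and $v_{i+1}$ by exactly $y_i$ parallel edges; and for each $i=1,\dots,n$ attach $x_i-1$ new pendant vertices, each joined to $v_i$ by a single edge. There are no other vertices or edges. *)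

(* Defs.v *)
From mathcomp Require Import all_boot.
Set Implicit Arguments. Unset Strict Implicit. Unset Printing Implicit Defensive.

(* A finite multigraph is given by a finite type of edges E (parallel edges
   are distinct elements of E) and an endpoint map into a vertex type V. *)
Definition disjoint_edges (V : eqType) (u w : V * V) : bool :=
  ~~ [|| u.1 == w.1, u.1 == w.2, u.2 == w.1 | u.2 == w.2].

Definition is_matching (E : finType) (V : eqType) (ends : E -> V * V)
  (M : {set E}) : bool :=
  [forall e in M, forall f in M, (e != f) ==> disjoint_edges (ends e) (ends f)].

Definition pmatch (E : finType) (V : eqType) (ends : E -> V * V) (k : nat) : nat :=
  #|[set M : {set E} | is_matching ends M & #|M| == k]|.

(* Hosoya index Z(G) = sum_{k>=0} p(G,k); p(G,k) = 0 for k > #|E|. *)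
Definition hosoya (E : finType) (V : eqType) (ends : E -> V * V) : nat :=
  \sum_(k < #|E|.+1) pmatch ends k.

(* Caterpillar-bond graph D_n(x_1..x_n; y_1..y_{n-1}) with x_{i+1} = a i,
   y_i = b i (0-indexed: a 0 .. a (n-1), b 1 .. b (n-1)).
   Vertices are encoded in nat * nat: spine vertex v_i = (i, 0),
   the j-th pendant vertex at v_i = (i, j+1). *)
Definition cat_edge (n : nat) (a b : nat -> nat) : finType :=
  ({i : 'I_n & 'I_((a i).-1)} + {i : 'I_n & 'I_(if i.+1 < n then b i.+1 else 0)})%type.

Definition cat_ends (n : nat) (a b : nat -> nat) (e : cat_edge n a b) : (nat * nat) * (nat * nat) :=
  match e with
  | inl (existT i j) => ((i : nat, 0), (i : nat, (j : nat).+1))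
  | inr (existT i _) => ((i : nat, 0), ((i : nat).+1, 0))
  end.

Fixpoint cfp (a b : nat -> nat) (k : nat) : nat :=
  match k with
  | 0 => a 0
  | 1 => a 0 * a 1 + b 1
  | (k'.+1 as k1).+1 => a k1.+1 * cfp a b k1 + b k1.+1 * cfp a b k'
  end.

(* Main.v *)
Require Import Defs.
From mathcomp Require Import all_boot zify.
Set Implicit Arguments. Unset Strict Implicit. Unset Printing Implicit Defensive.

Section Gen.
Variables (E : finType) (V : eqType) (ends : E -> V * V).

Definition mats (S : {set E}) := [set M : {set E} | is_matching ends M & M \subset S].
Definition Zs S := #|mats S|.

Lemma dis_sym (u w : V * V) : disjoint_edges u w = disjoint_edges w u.
Proof.
rewrite /disjoint_edges; congr negb.
by rewrite (eq_sym u.1 w.1) (eq_sym u.1 w.2) (eq_sym u.2 w.1) (eq_sym u.2 w.2);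
  case: (w.1 == u.1); case: (w.2 == u.1); case: (w.1 == u.2); case: (w.2 == u.2).
Qed.

Lemma dis_self (u : V * V) : ~~ disjoint_edges u u.
Proof. by rewrite /disjoint_edges eqxx. Qed.

Lemma matchingP (M : {set E}) : reflect (forall e f, e \in M -> f \in M -> e != f ->
   disjoint_edges (ends e) (ends f)) (is_matching ends M).
Proof.
apply: (iffP forallP) => [H e f eM fM ef|H e].
  by move: (H e) => /implyP /(_ eM) /forallP /(_ f) /implyP /(_ fM) /implyP /(_ ef).
apply/implyP => eM; apply/forallP => f; apply/implyP => fM; apply/implyP => ef.
exact: H.
Qed.

Lemma key (S T A : {set E}) :
  (forall e, (e \in S) = (e \in T) || (e \in A)) ->
  (forall e, e \in T -> e \notin A) ->
  (forall e f, e \in A -> f \in A -> e != f -> ~~ disjoint_edges (ends e) (ends f)) ->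
  Zs S = Zs T + \sum_(e in A) Zs [set f in T | disjoint_edges (ends f) (ends e)].
Proof.
move=> HS HTA HA.
rewrite /Zs -(cardsID [set M | M :&: A == set0] (mats S)).
have -> : mats S :&: [set M | M :&: A == set0] = mats T.
  apply/setP => M; rewrite !inE.
  case mM: (is_matching ends M) => //=.
  apply/idP/idP.
    move=> /andP [/subsetP MS /eqP MA]; apply/subsetP => e eM.
    have := MS e eM; rewrite HS => /orP [//|eA].
    have : e \in M :&: A by rewrite inE eM eA.
    by rewrite MA inE.
  move=> /subsetP MT; apply/andP; split.
    by apply/subsetP => e eM; rewrite HS MT.
  apply/eqP/setP => e; rewrite !inE; apply/negP => /andP [eM eA].
  by move: (HTA e (MT e eM)); rewrite eA.
congr addn.
rewrite -sum1_card.
transitivity (\sum_(M in mats S :\: [set M | M :&: A == set0]) \sum_(e in A) (e \in M : nat)).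
  apply: eq_bigr => M; rewrite !inE => /andP [/negbTE MA /andP [mM _]].
  have [e0 e0MA] : exists e0, e0 \in M :&: A.
    by apply/set0Pn; rewrite MA.
  rewrite (bigD1 e0) /=; last by move: e0MA; rewrite inE => /andP [].
  move: e0MA; rewrite inE => /andP [e0M e0A]; rewrite e0M.
  rewrite big1 // => e /andP [eA ne].
  case eM: (e \in M) => //.
  by move/matchingP: mM => /(_ e e0 eM e0M ne) H; move: (HA e e0 eA e0A ne); rewrite H.
rewrite exchange_big /=.
apply: eq_bigr => e eA.
transitivity #|[set M in mats S | e \in M]|.
  rewrite -sum1_card big_mkcond [RHS]big_mkcond; apply: eq_bigr => M _.
  rewrite !inE; case eM: (e \in M); rewrite ?andbF ?andbT; last by case: ifP.
  suff -> : M :&: A != set0 by [].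
  by apply/set0Pn; exists e; rewrite inE eM eA.
have eT : e \notin T by apply/negP => /HTA; rewrite eA.
set Te := [set f in T | disjoint_edges (ends f) (ends e)].
have -> : [set M in mats S | e \in M] = [set e |: M | M in mats Te].
  apply/setP => M; rewrite !inE; apply/idP/idP.
    move=> /andP [/andP [mM MS] eM].
    apply/imsetP; exists (M :\ e); last by rewrite setD1K.
    rewrite !inE; apply/andP; split.
      apply/matchingP => f g; rewrite !inE => /andP [_ fM] /andP [_ gM].
      by move/matchingP: mM; apply.
    apply/subsetP => f; rewrite !inE => /andP [fe fM].
    move/subsetP: MS => /(_ f fM); rewrite HS => /orP [fT|fA].
      by rewrite fT /=; move/matchingP: mM => /(_ f e fM eM fe).
    by move/matchingP: mM => /(_ f e fM eM fe); move: (HA f e fA eA fe) => /negbTE ->.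
  move=> /imsetP [M' M'm ->]; rewrite setU11 andbT.
  move: M'm; rewrite inE => /andP [mM' /subsetP M'T].
  apply/andP; split.
    apply/matchingP => f g; rewrite !inE => /orP [/eqP->|fM] /orP [/eqP->|gM].
    - by rewrite eqxx.
    - by move=> _; move: (M'T g gM); rewrite inE dis_sym => /andP [].
    - by move=> _; move: (M'T f fM); rewrite inE => /andP [].
    - by move/matchingP: mM'; apply.
  apply/subsetP => f; rewrite !inE => /orP [/eqP->|fM]; rewrite HS ?eA ?orbT //.
  by move: (M'T f fM); rewrite inE => /andP [->].
rewrite card_in_imset // => M1 M2; rewrite !inE => /andP [_ /subsetP M1T] /andP [_ /subsetP M2T] H.
have nM1 : e \notin M1 by apply/negP => /M1T; rewrite inE (negbTE (dis_self _)) andbF.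
have nM2 : e \notin M2 by apply/negP => /M2T; rewrite inE (negbTE (dis_self _)) andbF.
by rewrite -(setU1K nM1) -(setU1K nM2) H.
Qed.

Lemma hosoyaE : hosoya ends = Zs setT.
Proof.
rewrite /hosoya /pmatch /Zs.
under eq_bigr => k _ do rewrite -sum1_card big_mkcond /=.
rewrite exchange_big -[RHS]sum1_card [RHS]big_mkcond /=; apply: eq_bigr => M _.
rewrite !inE subsetT andbT.
under eq_bigr => k _ do rewrite inE.
case: (is_matching ends M) => /=; last by rewrite big1.
have HM : #|M| < #|E|.+1 by rewrite ltnS max_card.
rewrite (bigD1 (Ordinal HM)) //= eqxx big1 // => k /negbTE nk.
case: eqP => // Hk; move: nk.
have -> : k = Ordinal HM by apply/val_inj; rewrite /= Hk.
by rewrite eqxx.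
Qed.
End Gen.
Lemma sumtag n (m : 'I_n -> nat) (i0 : nat) (c : nat) (Hi : i0 < n) :
  \sum_(x : {i : 'I_n & 'I_(m i)}) (if (tag x : nat) == i0 then c else 0) = m (Ordinal Hi) * c.
Proof.
transitivity (\sum_(x : {i : 'I_n & 'I_(m i)})
   (fun (i : 'I_n) (_ : 'I_(m i)) => if (i : nat) == i0 then c else 0) (tag x) (tagged x)).
  by apply: eq_bigr => -[].
rewrite -(sig_big_dep xpredT (fun _ => xpredT) (fun i (_ : 'I_(m i)) => if (i : nat) == i0 then c else 0)) /=.
rewrite (bigD1 (Ordinal Hi)) //= eqxx [X in _ + X]big1 ?addn0.
  by rewrite sum_nat_const card_ord mulnC.
by move=> i /negbTE ne; apply: big1 => j _; case: eqP => // H; move: ne; rewrite (_ : i = Ordinal Hi) ?eqxx //; apply: val_inj.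
Qed.

Lemma mats0 (E : finType) (V : eqType) (ends : E -> V * V) : Zs ends set0 = 1.
Proof.
rewrite /Zs (_ : mats ends set0 = [set set0]) ?cards1 //.
apply/setP => M; rewrite !inE subset0; case: eqP => [->|] /=; rewrite ?andbT ?andbF //.

by apply/matchingP => e f; rewrite inE.
Qed.

Lemma share (V : eqType) (v : V) (u w : V * V) :
  (u.1 == v) || (u.2 == v) -> (w.1 == v) || (w.2 == v) -> ~~ disjoint_edges u w.
Proof.
case: u => u1 u2; case: w => w1 w2 /=.
by move=> /orP[/eqP->|/eqP->] /orP[/eqP->|/eqP->]; rewrite /disjoint_edges /= eqxx ?orbT.
Qed.

Section Cat.
Variables (n : nat) (a b : nat -> nat).
Local Notation E := (cat_edge n a b).
Local Notation ends := (@cat_ends n a b).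
Definition lvl k : {set E} := [set e | (ends e).2.1 < k].

Lemma lvl0 : lvl 0 = set0.
Proof. by apply/setP => e; rewrite !inE. Qed.

Lemma lvln : lvl n = setT.
Proof.
apply/setP; case=> [[i j]|[i j]]; rewrite !inE /=; first exact: ltn_ord.
by move: j; case: (i.+1 < n) => // -[].
Qed.

Lemma Te_pend k (i : 'I_n) (j : 'I_((a i).-1)) : (i : nat) = k ->
  [set f in lvl k | disjoint_edges (ends f) (ends (inl (Tagged (fun i : 'I_n => 'I_((a i).-1)) j)))] = lvl k.
Proof.
move=> Hi; apply/setP; case=> [[i' j']|[i' j']]; rewrite !inE /= /disjoint_edges /= !xpair_eqE /=; lia.
Qed.

Lemma Te_spine k (i : 'I_n) (j : 'I_(if i.+1 < n then b i.+1 else 0)) : (i : nat).+1 = k ->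
  [set f in lvl k | disjoint_edges (ends f) (ends (inr (Tagged (fun i : 'I_n => 'I_(if i.+1 < n then b i.+1 else 0)) j)))] = lvl k.-1.
Proof.
move=> Hi; apply/setP; case=> [[i' j']|[i' j']]; rewrite !inE /= /disjoint_edges /= !xpair_eqE /=; lia.
Qed.

Lemma step k : k < n -> 0 < a k ->
  Zs ends (lvl k.+1) = a k * Zs ends (lvl k) +
     (if k is k'.+1 then b k * Zs ends (lvl k') else 0).
Proof.
move=> kn ak.
rewrite (@key _ _ ends (lvl k.+1) (lvl k) (lvl k.+1 :\: lvl k)); first last.
- move=> e f; rewrite !inE => /andP [e1 e2] /andP [f1 f2] _.
  apply: (@share (prod nat nat : eqType) (k, 0)).
    by move: e1 e2; case: e => [[i j]|[i j]]; rewrite /= !xpair_eqE; lia.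
  by move: f1 f2; case: f => [[i j]|[i j]]; rewrite /= !xpair_eqE; lia.
- by move=> e; rewrite !inE => ->.
- by move=> e; rewrite !inE; lia.
rewrite big_mkcond big_sumType.
have P1 : \sum_(x : {i : 'I_n & 'I_((a i).-1)}) (if inl x \in lvl k.+1 :\: lvl k then
    Zs ends [set f in lvl k | disjoint_edges (ends f) (ends (inl x))] else 0) =
   \sum_(x : {i : 'I_n & 'I_((a i).-1)}) (if (tag x : nat) == k then Zs ends (lvl k) else 0).
  apply: eq_bigr => -[i j] _.
  case: (eqVneq (i : nat) k) => Hi.
    by rewrite (@Te_pend k i j Hi) !inE /=; case: ifP => //; lia.
  by rewrite !inE /=; case: ifP => //; lia.
have P2 : \sum_(y : {i : 'I_n & 'I_(if i.+1 < n then b i.+1 else 0)})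
   (if inr y \in lvl k.+1 :\: lvl k then
    Zs ends [set f in lvl k | disjoint_edges (ends f) (ends (inr y))] else 0) =
   (if k is k'.+1 then b k * Zs ends (lvl k') else 0).
  transitivity (\sum_(y : {i : 'I_n & 'I_(if i.+1 < n then b i.+1 else 0)})
     (if (tag y : nat).+1 == k then Zs ends (lvl k.-1) else 0)).
    apply: eq_bigr => -[i j] _.
    case: (eqVneq ((i : nat).+1) k) => Hi.
      by rewrite (@Te_spine k i j Hi) !inE /=; case: ifP => //; lia.
    by rewrite !inE /=; case: ifP => //; lia.
  case: k kn {ak P1} => [|k'] kn /=; first by rewrite big1.
  under eq_bigr do rewrite eqSS.
  by rewrite (sumtag (fun i : 'I_n => if i.+1 < n then b i.+1 else 0) _ (ltnW kn)) /= kn.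
rewrite P1 P2 (sumtag (fun i : 'I_n => (a i).-1) _ kn) /=.
by rewrite -[in RHS](prednK ak) mulSn addnA.
Qed.
End Cat.

Lemma main_ind n (a b : nat -> nat) :
  (forall i, i < n -> 0 < a i) ->
  forall k, k < n -> Zs (@cat_ends n a b) (lvl n a b k.+1) = cfp a b k /\
    Zs (@cat_ends n a b) (lvl n a b k) = (if k is k'.+1 then cfp a b k' else 1).
Proof.
move=> Ha; elim=> [|k IH] kn.
  by rewrite step ?Ha // lvl0 mats0 muln1 addn0.
have [IH1 IH2] := IH (ltnW kn).
split=> //.
rewrite step ?Ha // IH1 IH2.
by case: k {IH IH1 IH2} kn => [|k] kn /=; rewrite ?muln1 // mulnC.
Qed.

Theorem theorem2 (n : nat) (a b : nat -> nat) :
  1 <= n ->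
  (forall i, i < n -> 0 < a i) ->
  (forall i, 1 <= i < n -> 0 < b i) ->
  hosoya (@cat_ends n a b) = cfp a b n.-1.
Proof.
move=> n1 Ha _.
rewrite hosoyaE -lvln.
have nn : n.-1 < n by rewrite prednK.
have [H _] := @main_ind n a b Ha n.-1 nn.
by rewrite -H prednK.
Qed.
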